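(* Let $\mathcal{A}$ be an arrangement of distinct lines in $\mathbb{P}^2_{\mathbb{C}}$ such that $|\operatorname{mult}(\mathcal{A})\cap H|\le 2$ for every $H\in\mathcal{A}$. Then $\mathcal{A}$ is inductively connected, and hence $\mathcal{R}(I(\mathcal{A}))$ is irreducible.
   Context: $\operatorname{mult}(\mathcal{A})$ is the set of points of $\mathbb{P}^2$ lying on at least three lines of $\mathcal{A}$. An arrangement $\mathcal{A}$ is inductively connected (i.c.) if its lines can be numbered $\mathcal{A}=\{H_1,\dots,H_n\}$ so that, with $\mathcal{A}_t=\{H_1,\dots,H_t\}$, one has $|H_t\cap\operatorname{mult}(\mathcal{A}_t)|\le 2$ for all $t$. Lines are identified with points of $(\mathbb{P}^2)^*$ via their coefficients; the incidence $I(\mathcal{A})$ is the set of triples $\{i,j,k\}$ with $H_i\cap H_j\cap H_k\neq\emptyset$; and $\mathcal{R}(I)=\{(H_1,\dots,H_n)\in((\mathbb{P}^2)^* )^n: H_i\ne H_j\ (i\ne j),\ \det(H_i,H_j,H_k)=0 \text{ iff } \{i,j,k\}\in I\}$ with the Zariski topology. *)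

(* Defs.v *)
(* Lines/points of P^2 are represented by nonzero vectors of
   'rV[C]_3 (homogeneous coordinates); two vectors represent the same
   projective point iff they are proportional. *)
From HB Require Import structures.
From mathcomp Require Import all_boot all_order all_algebra all_fingroup.
Set Implicit Arguments. Unset Strict Implicit. Unset Printing Implicit Defensive.
Import Order.TTheory GRing.Theory Num.Theory.
Local Open Scope ring_scope.

Section ArrDefs.
Variable C : fieldType.
Local Notation vec := ('rV[C]_3).

Definition pdistinct (u v : vec) : Prop := ~ exists c : C, v = c *: u.

Definition on_line (h p : vec) : Prop := \sum_(k < 3) h 0 k * p 0 k = 0.

Definition det3 (u v w : vec) : C :=
  \det (\matrix_(r < 3, c < 3) (nth 0 [:: u; v; w] r) 0 c).

Definition in_mult (n : nat) (P : pred 'I_n) (H : 'I_n -> vec) (p : vec) : Prop :=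
  p != 0 /\ exists i j k : 'I_n,
    [/\ i != j, i != k & j != k] /\ [/\ P i, P j & P k] /\
    [/\ on_line (H i) p, on_line (H j) p & on_line (H k) p].

Definition at_most_two_on (h : vec) (S : vec -> Prop) : Prop :=
  ~ exists p1 p2 p3 : vec,
      [/\ on_line h p1, on_line h p2 & on_line h p3] /\ [/\ S p1, S p2 & S p3] /\
      [/\ pdistinct p1 p2, pdistinct p1 p3 & pdistinct p2 p3].

Definition arrangement (n : nat) (H : 'I_n -> vec) : Prop :=
  (forall i, H i != 0) /\ (forall i j, i != j -> pdistinct (H i) (H j)).

(* inductively connected: a numbering H_(s 0), ..., H_(s (n-1)) such that
   |H_(s t) ∩ mult(A_t)| <= 2 with A_t = {H_(s 0),...,H_(s t)} *)
Definition ind_connected (n : nat) (H : 'I_n -> vec) : Prop :=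
  exists s : {perm 'I_n}, forall t : 'I_n,
    at_most_two_on (H (s t)) (in_mult (fun u : 'I_n => (u <= t)%N) (fun u => H (s u))).

Definition incidence (n : nat) (H : 'I_n -> vec) (i j k : 'I_n) : Prop :=
  exists p : vec, p != 0 /\ [/\ on_line (H i) p, on_line (H j) p & on_line (H k) p].

(* realization space R(I), as a (scaling-invariant) set of n-tuples of nonzero
   coefficient vectors, i.e. its cone in ((C^3 \ 0))^n *)
Definition realization (n : nat) (I : 'I_n -> 'I_n -> 'I_n -> Prop)
  (G : 'I_n -> vec) : Prop :=
  (forall i, G i != 0) /\ (forall i j, i != j -> pdistinct (G i) (G j)) /\
  (forall i j k, [/\ i != j, i != k & j != k] ->
     (det3 (G i) (G j) (G k) = 0 <-> I i j k)).

Inductive polyfun (n : nat) : (('I_n -> vec) -> C) -> Prop :=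
  | pf_const (c : C) : polyfun (fun _ => c)
  | pf_coord (i : 'I_n) (k : 'I_3) : polyfun (fun G => G i 0 k)
  | pf_add f g : polyfun f -> polyfun g -> polyfun (fun G => f G + g G)
  | pf_mul f g : polyfun f -> polyfun g -> polyfun (fun G => f G * g G).

(* multihomogeneous polynomial functions (homogeneous in each block of
   coordinates); these define the closed sets of (P^2)^n *)
Definition multihom (n : nat) (f : ('I_n -> vec) -> C) : Prop :=
  polyfun f /\ exists d : 'I_n -> nat, forall (G : 'I_n -> vec) (l : 'I_n -> C),
    f (fun i => l i *: G i) = (\prod_(i < n) l i ^+ d i) * f G.

(* Zariski closed subset of (P^2)^n cut out by a family F of multihomogeneous
   polynomials (membership for tuples of nonzero vectors) *)
Definition zclosed (n : nat) (Z : ('I_n -> vec) -> Prop) : Prop :=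
  exists F : (('I_n -> vec) -> C) -> Prop,
    (forall f, F f -> multihom f) /\
    (forall G, (forall i, G i != 0) -> (Z G <-> forall f, F f -> f G = 0)).

Definition zirreducible (n : nat) (X : ('I_n -> vec) -> Prop) : Prop :=
  (exists G, X G) /\
  forall Z1 Z2, zclosed Z1 -> zclosed Z2 ->
    (forall G, X G -> Z1 G \/ Z2 G) ->
    (forall G, X G -> Z1 G) \/ (forall G, X G -> Z2 G).

End ArrDefs.

(* Main.v *)
Require Import Defs.
From HB Require Import structures.
From mathcomp Require Import all_boot all_order all_algebra all_fingroup.
From Stdlib Require Import Ring Classical FunctionalExtensionality.
Import Order.TTheory GRing.Theory Num.Theory.
Local Open Scope ring_scope.
Set Implicit Arguments. Unset Strict Implicit. Unset Printing Implicit Defensive.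

Section Dev.
Variable C : numClosedFieldType.
Definition ad (x y : C) : C := x + y.
Definition mu (x y : C) : C := x * y.
Definition op (x : C) : C := - x.
Definition sb (x y : C) : C := x - y.
Definition z0 : C := 0.
Definition o1 : C := 1.
Definition iv (x : C) : C := x^-1.
Lemma CRth : @ring_theory C z0 o1 ad mu sb op eq.
Proof. rewrite /sb/ad/mu/op/z0/o1; split=> *; [exact: add0r|exact: addrC|exact: addrA|exact: mul1r|exact: mulrC|exact: mulrA|exact: mulrDl|by []|exact: subrr]. Qed.
Add Ring CR : CRth.
Ltac cring :=
  rewrite ?expr2;
  repeat match goal with
  | |- context[@Algebra.zero ?T] => change (@Algebra.zero T) with z0
  | |- context[@GRing.one ?T] => change (@GRing.one T) with o1
  | |- context[@Algebra.add ?T ?x ?y] => change (@Algebra.add T x y) with (ad x y)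
  | |- context[@GRing.mul ?T ?x ?y] => change (@GRing.mul T x y) with (mu x y)
  | |- context[@Algebra.opp ?T ?x] => change (@Algebra.opp T x) with (op x)
  | |- context[@GRing.inv ?T ?x] => change (@GRing.inv T x) with (iv x)
  end; match goal with |- ?a = ?b => change (@eq C a b) end; ring.

Local Notation vec := ('rV[C]_3).
Definition i0 : 'I_3 := @Ordinal 3 0 isT.
Definition i1 : 'I_3 := @Ordinal 3 1 isT.
Definition i2 : 'I_3 := @Ordinal 3 2 isT.

Ltac ordn := repeat match goal with |- context[@fun_of_matrix ?R ?m 3 ?A ?r ?k] =>
  lazymatch k with i0 => fail | i1 => fail | i2 => fail | _ =>
  first [ have ->: k = i0 by apply/val_inj | have -> : k = i1 by apply/val_inj | have -> : k = i2 by apply/val_inj ] end end.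

Lemma ord3_cases (k : 'I_3) : k = i0 \/ k = i1 \/ k = i2.
Proof.
case: k => [[|[|[|m]]] Hk].
- by left; apply/val_inj.
- by right; left; apply/val_inj.
- by right; right; apply/val_inj.
- by [].
Qed.

Lemma vec_ext (u v : vec) : u 0 i0 = v 0 i0 -> u 0 i1 = v 0 i1 -> u 0 i2 = v 0 i2 -> u = v.
Proof.
move=> h0 h1 h2; apply/rowP => k.
by case: (ord3_cases k) => [->|[->|->]].
Qed.

Implicit Types (u v w P Q L e : vec).
Definition dot (u v : vec) : C := u 0 i0 * v 0 i0 + u 0 i1 * v 0 i1 + u 0 i2 * v 0 i2.
Definition crossf (u v : vec) (k : 'I_3) : C :=
  if k == i0 then u 0 i1 * v 0 i2 - u 0 i2 * v 0 i1
  else if k == i1 then u 0 i2 * v 0 i0 - u 0 i0 * v 0 i2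
  else u 0 i0 * v 0 i1 - u 0 i1 * v 0 i0.
Definition cross (u v : vec) : vec := \row_k crossf u v k.
Lemma crs0 u v : cross u v 0 i0 = u 0 i1 * v 0 i2 - u 0 i2 * v 0 i1.
Proof. by rewrite mxE. Qed.
Lemma crs1 u v : cross u v 0 i1 = u 0 i2 * v 0 i0 - u 0 i0 * v 0 i2.
Proof. by rewrite mxE. Qed.
Lemma crs2 u v : cross u v 0 i2 = u 0 i0 * v 0 i1 - u 0 i1 * v 0 i0.
Proof. by rewrite mxE. Qed.
Lemma scE (a : C) (u : vec) k : (a *: u) 0 k = a * u 0 k.
Proof. by rewrite mxE. Qed.
Lemma adE (u v : vec) k : (u + v) 0 k = u 0 k + v 0 k.
Proof. by rewrite mxE. Qed.
Lemma opE (u : vec) k : (- u) 0 k = - u 0 k.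
Proof. by rewrite mxE. Qed.
Lemma zeE k : (0 : vec) 0 k = 0.
Proof. by rewrite mxE. Qed.
Global Opaque cross.

Ltac vsimp := rewrite /dot ?(crs0, crs1, crs2, scE, adE, opE, zeE).
Ltac vring := apply: vec_ext; vsimp; cring.

Lemma det3E (u v w : vec) : det3 u v w = dot (cross u v) w.
Proof.
rewrite /det3 (expand_det_row _ ord0) !big_ord_recl big_ord0 /cofactor.
rewrite !(expand_det_row _ ord0) !big_ord_recl !big_ord0 /cofactor !det_mx11.
rewrite !mxE /=.
ordn. rewrite !add0n.
have e1 : bump 0 0 = 1%N by [].
have e2 : bump 0 (bump 0 0) = 2%N by [].
rewrite ?e2 ?e1 ?expr0 ?expr1 ?expr2.
vsimp; cring.
Qed.

Lemma on_lineE (h p : vec) : on_line h p <-> dot h p = 0.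
Proof.
rewrite /on_line !big_ord_recl big_ord0 /dot; ordn.
by rewrite addr0 addrA.
Qed.

Lemma dotC u v : dot u v = dot v u.
Proof. rewrite /dot; cring. Qed.
Lemma dot_crossl u v : dot (cross u v) u = 0.
Proof. vsimp; cring. Qed.
Lemma dot_crossr u v : dot (cross u v) v = 0.
Proof. vsimp; cring. Qed.
Lemma det3_cyc u v w : det3 u v w = det3 v w u.
Proof. rewrite !det3E; vsimp; cring. Qed.
Lemma det3_swap u v w : det3 u v w = - det3 v u w.
Proof. rewrite !det3E; vsimp; cring. Qed.
Lemma det3_uu u w : det3 u u w = 0.
Proof. rewrite !det3E; vsimp; cring. Qed.
Lemma det3_scale (a b c : C) u v w : det3 (a *: u) (b *: v) (c *: w) = a * b * c * det3 u v w.
Proof. rewrite !det3E; vsimp; cring. Qed.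
Lemma cross_scale (a b : C) u v : cross (a *: u) (b *: v) = (a * b) *: cross u v.
Proof. vring. Qed.
Lemma cross_scaler (b : C) u v : cross u (b *: v) = b *: cross u v.
Proof. vring. Qed.
Lemma dot_scalel (a : C) u v : dot (a *: u) v = a * dot u v.
Proof. vsimp; cring. Qed.
Lemma det_id u v w P : det3 u v w *: P =
  dot u P *: cross v w + dot v P *: cross w u + dot w P *: cross u v.
Proof. rewrite det3E; vring. Qed.
Lemma cross_cross P Q L : cross (cross P Q) L = dot P L *: Q - dot Q L *: P.
Proof. vring. Qed.
Lemma cross_cross2 P L e : cross P (cross L e) = dot P e *: L - dot P L *: e.
Proof. vring. Qed.
Lemma cross_uu u : cross u u = 0.
Proof. vring. Qed.
Lemma cross_anti u v : cross u v = - cross v u.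
Proof. vring. Qed.

Lemma vec_nz u : u != 0 -> exists k, u 0 k != 0.
Proof.
move=> Hu; apply: NNPP => Hn; move/eqP: Hu; apply; apply/rowP => k.
rewrite zeE; apply/eqP; apply: contra_notT Hn => h; by exists k.
Qed.

Lemma solve_lin (a b c d : C) : a != 0 -> a * d = b * c -> d = c / a * b.
Proof. move=> Ha H; rewrite -[d](mulKf Ha) H; cring. Qed.

Lemma subr0_eq (x y : C) : x - y = 0 -> x = y.
Proof. by move/eqP; rewrite subr_eq0 => /eqP. Qed.

Lemma cross_par u v : u != 0 -> cross u v = 0 -> exists c, v = c *: u.
Proof.
move=> /vec_nz [k Hk] H.
have E0 := congr1 (fun x : vec => x 0 i0) H; have E1 := congr1 (fun x : vec => x 0 i1) H;
have E2 := congr1 (fun x : vec => x 0 i2) H; move: E0 E1 E2 => /=.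
rewrite crs0 crs1 crs2 !zeE => /subr0_eq E0 /subr0_eq E1 /subr0_eq E2.
case: (ord3_cases k) Hk => [->|[->|->]] Hk.
- exists (v 0 i0 / u 0 i0); apply: vec_ext; rewrite scE.
  + by rewrite divfK.
  + apply: solve_lin Hk _; rewrite E2; cring.
  + apply: solve_lin Hk _; rewrite -E1; cring.
- exists (v 0 i1 / u 0 i1); apply: vec_ext; rewrite scE.
  + apply: solve_lin Hk _; rewrite -E2; cring.
  + by rewrite divfK.
  + apply: solve_lin Hk _; rewrite E0; cring.
- exists (v 0 i2 / u 0 i2); apply: vec_ext; rewrite scE.
  + apply: solve_lin Hk _; rewrite E1; cring.
  + apply: solve_lin Hk _; rewrite -E0; cring.
  + by rewrite divfK.
Qed.

Lemma cross_nz_pd u v : cross u v != 0 -> pdistinct u v.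
Proof.
move=> H [c Hc]; move/eqP: H; apply; rewrite Hc cross_scaler.
by rewrite cross_uu scaler0.
Qed.

Lemma pd_cross u v : u != 0 -> pdistinct u v -> cross u v != 0.
Proof.
move=> Hu Hp; apply/eqP => H; apply: Hp; exact: cross_par.
Qed.

Lemma perp2 L P Q : dot P L = 0 -> dot Q L = 0 -> cross P Q != 0 ->
  exists c, L = c *: cross P Q.
Proof.
move=> h1 h2 h3; apply: cross_par h3 _.
by rewrite cross_cross h1 h2 !scale0r subrr.
Qed.

Definition evec (k : 'I_3) : vec := \row_j (j == k)%:R.

Lemma dot_evec P k : dot P (evec k) = P 0 k.
Proof.
rewrite /dot /evec !mxE.
case: (ord3_cases k) => [->|[->|->]]; rewrite /= ?mulr1n ?mulr0n; cring.
Qed.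

Lemma cross_surj P L : P != 0 -> dot P L = 0 -> exists w, L = cross P w.
Proof.
move=> /vec_nz [k Hk] H.
exists ((P 0 k)^-1 *: cross L (evec k)).
rewrite cross_scaler cross_cross2 H scale0r subr0 dot_evec scalerA mulVf //.
by rewrite scale1r.
Qed.


Lemma nonroot (p : {poly C}) : p != 0 -> exists t, p.[t] != 0.
Proof.
move=> Hp; apply: NNPP => Hn.
have Hall : all (root p) [seq i%:R | i <- iota 0 (size p)].
  apply/allP => x _; apply/negPn/negP => Hx; apply: Hn; by exists x.
have Hu : uniq [seq (i%:R : C) | i <- iota 0 (size p)].
  rewrite map_inj_uniq ?iota_uniq // => i j Hij.
  by apply/eqP; rewrite -(eqr_nat C); apply/eqP.
have := max_poly_roots Hp Hall Hu.
by rewrite size_map size_iota ltnn.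
Qed.

Definition pf (f : C -> C) := exists p : {poly C}, forall t, f t = p.[t].
Definition pc (f : C -> vec) := forall k, pf (fun t => f t 0 k).

Lemma pf_const (c : C) : pf (fun _ => c).
Proof. by exists c%:P => t; rewrite hornerC. Qed.
Lemma pf_id : pf (fun t => t).
Proof. by exists 'X => t; rewrite hornerX. Qed.
Lemma pf_add f g : pf f -> pf g -> pf (fun t => f t + g t).
Proof. by move=> [p Hp] [q Hq]; exists (p + q) => t; rewrite hornerD Hp Hq. Qed.
Lemma pf_mul f g : pf f -> pf g -> pf (fun t => f t * g t).
Proof. by move=> [p Hp] [q Hq]; exists (p * q) => t; rewrite hornerM Hp Hq. Qed.
Lemma pf_opp f : pf f -> pf (fun t => - f t).
Proof. by move=> [p Hp]; exists (- p) => t; rewrite hornerN Hp. Qed.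
Lemma pf_sub f g : pf f -> pf g -> pf (fun t => f t - g t).
Proof. by move=> hf hg; apply: pf_add hf (pf_opp hg). Qed.
Lemma pf_ext f g : (forall t, f t = g t) -> pf f -> pf g.
Proof. by move=> E [p Hp]; exists p => t; rewrite -E. Qed.

Lemma pc_ext f g : (forall t, f t = g t) -> pc f -> pc g.
Proof. by move=> E H k; apply: pf_ext (H k) => t; rewrite E. Qed.
Lemma pc_const u : pc (fun _ => u).
Proof. by move=> k; apply: pf_const. Qed.
Lemma pc_add f g : pc f -> pc g -> pc (fun t => f t + g t).
Proof. by move=> hf hg k; apply: pf_ext (pf_add (hf k) (hg k)) => t; rewrite adE. Qed.
Lemma pc_scale (s : C -> C) f : pf s -> pc f -> pc (fun t => s t *: f t).
Proof. by move=> ha hf k; apply: pf_ext (pf_mul ha (hf k)) => t; rewrite scE. Qed.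
Lemma pc_cross f g : pc f -> pc g -> pc (fun t => cross (f t) (g t)).
Proof.
move=> hf hg k; case: (ord3_cases k) => [->|[->|->]].
- apply: pf_ext (pf_sub (pf_mul (hf i1) (hg i2)) (pf_mul (hf i2) (hg i1))) => t; by rewrite crs0.
- apply: pf_ext (pf_sub (pf_mul (hf i2) (hg i0)) (pf_mul (hf i0) (hg i2))) => t; by rewrite crs1.
- apply: pf_ext (pf_sub (pf_mul (hf i0) (hg i1)) (pf_mul (hf i1) (hg i0))) => t; by rewrite crs2.
Qed.
Lemma pf_dot f g : pc f -> pc g -> pf (fun t => dot (f t) (g t)).
Proof.
move=> hf hg; rewrite /dot.
exact: pf_add (pf_add (pf_mul (hf i0) (hg i0)) (pf_mul (hf i1) (hg i1))) (pf_mul (hf i2) (hg i2)).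
Qed.
Lemma pf_det f g h : pc f -> pc g -> pc h -> pf (fun t => det3 (f t) (g t) (h t)).
Proof.
move=> hf hg hh; apply: pf_ext (pf_dot (pc_cross hf hg) hh) => t; by rewrite det3E.
Qed.

Definition generic (P : C -> Prop) :=
  exists h : {poly C}, h != 0 /\ forall t, h.[t] != 0 -> P t.

Lemma gen_true : generic (fun _ => True).
Proof. by exists 1; split; rewrite ?oner_eq0. Qed.
Lemma gen_and (P Q : C -> Prop) : generic P -> generic Q -> generic (fun t => P t /\ Q t).
Proof.
move=> [h [Hh HP]] [g [Hg HQ]]; exists (h * g); split; first by rewrite mulf_eq0 negb_or Hh.
by move=> t; rewrite hornerM mulf_eq0 negb_or => /andP [??]; split; [apply: HP|apply: HQ].
Qed.
Lemma gen_impl (P Q : C -> Prop) : (forall t, P t -> Q t) -> generic P -> generic Q.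
Proof. by move=> I [h [Hh HP]]; exists h; split => // t /HP /I. Qed.
Lemma gen_nz f t0 : pf f -> f t0 != 0 -> generic (fun t => f t != 0).
Proof.
move=> [p Hp] H; exists p; split; last by move=> t; rewrite Hp.
by apply/eqP => p0; move/eqP: H; apply; rewrite Hp p0 horner0.
Qed.
Lemma gen_ex (P : C -> Prop) : generic P -> exists t, P t.
Proof. by move=> [h [/nonroot [t Ht] HP]]; exists t; apply: HP. Qed.
Lemma gen_zero f : pf f -> generic (fun t => f t = 0) -> forall t, f t = 0.
Proof.
move=> [p Hp] [h [Hh HP]].
have : p * h = 0.
  apply: NNPP => /eqP /nonroot [t]; rewrite hornerM.
  case: (eqVneq h.[t] 0) => [->|Ht]; first by rewrite mulr0 eqxx.
  by rewrite -Hp HP // mul0r eqxx.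
move/eqP; rewrite mulf_eq0 (negbTE Hh) orbF => /eqP p0 t.
by rewrite Hp p0 horner0.
Qed.
Lemma gen_vnz f t0 : pc f -> f t0 != 0 -> generic (fun t => f t != 0).
Proof.
move=> hf /vec_nz [k Hk]; apply: gen_impl (gen_nz (hf k) Hk) => t Ht.
by apply: contraNneq Ht => ->; rewrite zeE.
Qed.
Lemma gen_seq (T : eqType) (P : T -> C -> Prop) (s : seq T) :
  (forall x, generic (P x)) -> generic (fun t => forall x, x \in s -> P x t).
Proof.
move=> H; elim: s => [|x s IH]; first by apply: gen_impl gen_true => t _ x.
apply: gen_impl (gen_and (H x) IH) => t [h1 h2] y; rewrite inE => /orP [/eqP ->//|].
exact: h2.
Qed.
Lemma gen_fin (T : finType) (P : T -> C -> Prop) :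
  (forall x, generic (P x)) -> generic (fun t => forall x, P x t).
Proof.
move=> H; apply: gen_impl (gen_seq (enum T) H) => t h x; apply: h; by rewrite mem_enum.
Qed.

Lemma polyfun_pc n (f : ('I_n -> vec) -> C) (Phi : 'I_n -> C -> vec) :
  polyfun f -> (forall i, pc (Phi i)) -> pf (fun t => f (fun i => Phi i t)).
Proof.
move=> Hf HP; elim: Hf.
- by move=> c; apply: pf_const.
- by move=> i k; apply: HP.
- by move=> f1 g1 _ h1 _ h2; apply: pf_add.
- by move=> f1 g1 _ h1 _ h2; apply: pf_mul.
Qed.


Lemma det3_vu u v : det3 u v u = 0.
Proof. by rewrite det3_cyc det3_cyc det3_uu. Qed.
Lemma det3_vv u v : det3 u v v = 0.
Proof. by rewrite det3_cyc det3_uu. Qed.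

Section Arr.
Variable n : nat.
Variable H : 'I_n -> vec.
Hypothesis arrH : arrangement H.

Definition Zh (a b c : 'I_n) := det3 (H a) (H b) (H c) = 0.

Lemma Hnz i : H i != 0.
Proof. by case: arrH. Qed.
Lemma Hcross i j : i != j -> cross (H i) (H j) != 0.
Proof. by case: arrH => h1 h2 hij; apply: pd_cross (h1 i) (h2 _ _ hij). Qed.

Lemma inc_det i j k : i != j -> (Zh i j k <-> incidence H i j k).
Proof.
move=> hij; split.
- move=> hz; exists (cross (H i) (H j)); split; first exact: Hcross.
  split; apply/on_lineE; rewrite dotC ?dot_crossl ?dot_crossr //.
  by rewrite -det3E.
- move=> [p [pnz [/on_lineE h1 /on_lineE h2 /on_lineE h3]]].
  have := det_id (H i) (H j) (H k) p; rewrite h1 h2 h3 !scale0r !addr0.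
  by move/eqP; rewrite scaler_eq0 (negbTE pnz) orbF => /eqP.
Qed.

Definition sameZ (V : 'I_n -> vec) :=
  [/\ (forall i, V i != 0), (forall i j, i != j -> cross (V i) (V j) != 0) &
      (forall a b c : 'I_n, det3 (V a) (V b) (V c) = 0 <-> Zh a b c)].

Lemma det_degen (V : 'I_n -> vec) (a b c : 'I_n) : (a == b) || (a == c) || (b == c) ->
  det3 (V a) (V b) (V c) = 0.
Proof.
by case/orP => [/orP [] | ] /eqP ->; rewrite ?det3_uu ?det3_vu ?det3_vv.
Qed.

Lemma real_sameZ G : realization (incidence H) G -> sameZ G.
Proof.
move=> [g1 [g2 g3]]; split => // [i j hij|a b c]; first exact: pd_cross (g1 i) (g2 _ _ hij).
case hd : ((a == b) || (a == c) || (b == c)).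
- rewrite /Zh !det_degen //.
- move: hd => /negbT; rewrite !negb_or => /andP [/andP [hab hac] hbc].
  rewrite inc_det //; exact: g3.
Qed.

Lemma H_sameZ : sameZ H.
Proof.
split => //; [exact: Hnz | exact: Hcross].
Qed.

Lemma sameZ_real V : sameZ V -> realization (incidence H) V.
Proof.
move=> [v1 v2 v3]; split => //; split; first by move=> i j hij; apply: cross_nz_pd; apply: v2.
move=> i j k [hij hik hjk]; rewrite -inc_det //; exact: v3.
Qed.

Lemma sameZ_scale G V (l : 'I_n -> C) : sameZ G -> (forall i, G i = l i *: V i) -> sameZ V.
Proof.
move=> [g1 g2 g3] E.
have lnz i : l i != 0.
  by apply/eqP => h; move: (g1 i); rewrite E h scale0r eqxx.
split.
- by move=> i; apply/eqP => h; move: (g1 i); rewrite E h scaler0 eqxx.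
- move=> i j hij; apply/eqP => h; move: (g2 _ _ hij); rewrite !E cross_scale h scaler0 eqxx.
  by [].
- move=> a b c; rewrite -g3 !E det3_scale; split.
  + by move=> ->; rewrite mulr0.
  + by move/eqP; rewrite !mulf_eq0 (negbTE (lnz a)) (negbTE (lnz b)) (negbTE (lnz c)) /= => /eqP.
Qed.


Lemma dot_par P Q x (mu0 : C) : Q = mu0 *: P -> Q != 0 -> dot Q x = 0 -> dot P x = 0.
Proof.
move=> E Qnz; rewrite E dot_scalel => /eqP; rewrite mulf_eq0 => /orP [/eqP m0|/eqP //].
by move: Qnz; rewrite E m0 scale0r eqxx.
Qed.

Definition pt (a b : 'I_n) := cross (H a) (H b).

Lemma ptpar (a b x y : 'I_n) (c : C) : x != y -> pt x y = c *: pt a b -> Zh a b x /\ Zh a b y.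
Proof.
move=> hxy E; rewrite /Zh !det3E; split.
- apply: (dot_par E); [exact: Hcross | exact: dot_crossl].
- apply: (dot_par E); [exact: Hcross | exact: dot_crossr].
Qed.

Hypothesis hyp2 : forall i : 'I_n, at_most_two_on (H i) (in_mult predT H).
Variables G1 G2 : 'I_n -> vec.
Hypothesis rG1 : realization (incidence H) G1.
Hypothesis rG2 : realization (incidence H) G2.

Definition Inv (k : nat) (Phi : 'I_n -> C -> vec) (l m : 'I_n -> C) :=
 [/\ forall i, pc (Phi i), forall i, G1 i = l i *: Phi i 0, forall i, G2 i = m i *: Phi i 1 &
   forall a b c : 'I_n, (a < k)%N -> (b < k)%N -> (c < k)%N -> Zh a b c ->
     forall t, det3 (Phi a t) (Phi b t) (Phi c t) = 0].

Definition linc (u v : vec) (t : C) : vec := (1 - t) *: u + t *: v.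
Lemma linc0 u v : linc u v 0 = u.
Proof. by rewrite /linc subr0 scale1r scale0r addr0. Qed.
Lemma linc1 u v : linc u v 1 = v.
Proof. by rewrite /linc subrr scale0r add0r scale1r. Qed.
Lemma pc_linc u v : pc (linc u v).
Proof.
apply: pc_add; apply: pc_scale; rewrite ?pc_const //.
- exact: pf_sub (pf_const 1) pf_id.
- exact: pc_const.
- exact: pf_id.
- exact: pc_const.
Qed.

Lemma Inv0 : Inv 0 (fun i => linc (G1 i) (G2 i)) (fun _ => 1) (fun _ => 1).
Proof.
split => //.
- move=> i; exact: pc_linc.
- by move=> i; rewrite linc0 scale1r.
- by move=> i; rewrite linc1 scale1r.
Qed.

Section Step.
Variables (k : nat) (Phi : 'I_n -> C -> vec) (l m : 'I_n -> C).
Hypothesis inv : Inv k Phi l m.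
Variable K : 'I_n.
Hypothesis hK : nat_of_ord K = k.

Lemma sZ0 : sameZ (fun i => Phi i 0).
Proof. case: inv => _ h _ _; exact: sameZ_scale (real_sameZ rG1) h. Qed.
Lemma sZ1 : sameZ (fun i => Phi i 1).
Proof. case: inv => _ _ h _; exact: sameZ_scale (real_sameZ rG2) h. Qed.

Definition special (a b : 'I_n) := [/\ (a < k)%N, (b < k)%N, a != b & Zh a b K].
Definition Pc (a b : 'I_n) (t : C) := cross (Phi a t) (Phi b t).

Lemma pc_Pc (a b : 'I_n) : pc (Pc a b).
Proof. case: inv => h _ _ _; exact: pc_cross. Qed.

Lemma through (a b x : 'I_n) : special a b -> (x < k)%N -> Zh a b x ->
  forall t, dot (Pc a b t) (Phi x t) = 0.
Proof.
case: inv => _ _ _ h4 [ha hb _ _] hx hz t; rewrite /Pc -det3E; exact: h4.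
Qed.

Lemma Pgen (a b : 'I_n) : special a b -> generic (fun t => Pc a b t != 0).
Proof.
move=> [_ _ hab _]; apply: (gen_vnz (t0 := 0)); first exact: pc_Pc.
by case: sZ0 => _ h _; apply: h.
Qed.

Lemma concl (a b : 'I_n) (phi : C -> vec) (x y : 'I_n) : special a b -> pc phi ->
  (forall t, dot (Pc a b t) (phi t) = 0) -> (x < k)%N -> (y < k)%N -> Zh a b x -> Zh a b y ->
  forall t, det3 (Phi x t) (Phi y t) (phi t) = 0.
Proof.
move=> sab hphi hd hx hy zx zy.
case: inv => hp _ _ _.
apply: gen_zero; first exact: pf_det.
apply: gen_impl (Pgen sab) => t hP.
have := det_id (Phi x t) (Phi y t) (phi t) (Pc a b t).
rewrite (dotC (Phi x t)) (dotC (Phi y t)) (dotC (phi t)) hd !(through sab) //.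
rewrite !scale0r !addr0 => /eqP; rewrite scaler_eq0 (negbTE hP) orbF => /eqP //.
Qed.

Lemma lt_ne (a : 'I_n) : (a < k)%N -> a != K.
Proof. by move=> ha; apply/eqP => e; move: ha; rewrite e hK ltnn. Qed.

Lemma special_mult (a b : 'I_n) : special a b -> in_mult predT H (pt a b) /\ on_line (H K) (pt a b).
Proof.
move=> [ha hb hab hz].
have oK : on_line (H K) (pt a b) by apply/on_lineE; rewrite dotC -det3E.
split => //; split; first exact: Hcross.
exists a, b, K; split; first by split => //; apply: lt_ne.
split => //; split => //; apply/on_lineE; rewrite dotC ?dot_crossl ?dot_crossr //.
Qed.

Lemma sc_two (t0 : C) (a b c d : 'I_n) : sameZ (fun i => Phi i t0) -> special a b -> special c d ->
  pdistinct (pt a b) (pt c d) ->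
  exists lam, Phi K t0 = lam *: cross (Pc a b t0) (Pc c d t0).
Proof.
move=> [v1 v2 v3] [ha hb hab zab] [hc hd hcd zcd] pd.
apply: perp2.
- by rewrite /Pc -det3E; apply/v3.
- by rewrite /Pc -det3E; apply/v3.
apply/eqP => E.
have Pnz : Pc a b t0 != 0 by apply: v2.
have Qnz : Pc c d t0 != 0 by apply: v2.
have [mu0 Emu] := cross_par Pnz E.
have zc : Zh a b c.
  apply/v3; rewrite det3E; apply: (dot_par Emu Qnz); exact: dot_crossl.
have zd : Zh a b d.
  apply/v3; rewrite det3E; apply: (dot_par Emu Qnz); exact: dot_crossr.
have [lam El] : exists lam, pt a b = lam *: cross (H c) (H d).
  apply: perp2; [ by rewrite dotC -det3E | by rewrite dotC -det3E | exact: Hcross].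
apply: pd; exists lam^-1.
have lnz : lam != 0.
  by apply/eqP => l0; move: (Hcross hab); rewrite -/(pt a b) El l0 scale0r eqxx.
by rewrite El scalerA mulVf // scale1r.
Qed.

Lemma step : exists (phi : C -> vec) (lk mk : C),
  [/\ pc phi, G1 K = lk *: phi 0, G2 K = mk *: phi 1 &
    forall a b : 'I_n, (a < k)%N -> (b < k)%N -> Zh a b K ->
      forall t, det3 (Phi a t) (Phi b t) (phi t) = 0].
Proof.
case: (classic (exists a b, special a b)) => [[a [b sab]] | noS]; last first.
  exists (linc (G1 K) (G2 K)), 1, 1; split.
  - exact: pc_linc.
  - by rewrite linc0 scale1r.
  - by rewrite linc1 scale1r.
  - move=> a b ha hb hz t; case: (eqVneq a b) => [->|hab]; first by rewrite det3_uu.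
    by exfalso; apply: noS; exists a, b.
case: inv => hpc hl hm h4.
case: (classic (exists c d, special c d /\ pdistinct (pt a b) (pt c d))) =>
  [[c [d [scd pdq]]] | noB1].
  exists (fun t => cross (Pc a b t) (Pc c d t)).
  have [la Ela] := sc_two sZ0 sab scd pdq.
  have [ma Ema] := sc_two sZ1 sab scd pdq.
  exists (l K * la), (m K * ma); split.
  - exact: pc_cross (pc_Pc a b) (pc_Pc c d).
  - by rewrite hl Ela scalerA.
  - by rewrite hm Ema scalerA.
  move=> x y hx hy hz t; case: (eqVneq x y) => [->|hxy]; first by rewrite det3_uu.
  have sxy : special x y by [].
  have [m1 o1] := special_mult sab.
  have [m2 o2] := special_mult scd.
  have [m3 o3] := special_mult sxy.
  case: (classic (pdistinct (pt a b) (pt x y))) => hpr.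
  + case: (classic (pdistinct (pt c d) (pt x y))) => hqr.
    * exfalso; move: (@hyp2 K); rewrite /at_most_two_on; apply; exists (pt a b), (pt c d), (pt x y); split => //.
    * have [c' Ec] : exists c', pt x y = c' *: pt c d.
        by apply: NNPP => hn; apply: hqr => [[c' Ec]]; apply: hn; exists c'.
      have [zx zy] := ptpar hxy Ec.
      exact: (@concl c d (fun t => cross (Pc a b t) (Pc c d t)) x y scd
        (pc_cross (pc_Pc a b) (pc_Pc c d)) (fun t' => etrans (dotC _ _) (dot_crossr _ _)) hx hy zx zy t).
  + have [c' Ec] : exists c', pt x y = c' *: pt a b.
      by apply: NNPP => hn; apply: hpr => [[c' Ec]]; apply: hn; exists c'.
    have [zx zy] := ptpar hxy Ec.
    exact: (@concl a b (fun t => cross (Pc a b t) (Pc c d t)) x y sab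
        (pc_cross (pc_Pc a b) (pc_Pc c d)) (fun t' => etrans (dotC _ _) (dot_crossl _ _)) hx hy zx zy t).
have Pnz0 : Pc a b 0 != 0 by case: sab => _ _ hab _; case: sZ0 => _ h _; apply: h.
have Pnz1 : Pc a b 1 != 0 by case: sab => _ _ hab _; case: sZ1 => _ h _; apply: h.
have [w1 Ew1] : exists w, Phi K 0 = cross (Pc a b 0) w.
  apply: cross_surj Pnz0 _; rewrite /Pc -det3E; case: sZ0 => _ _ h; apply/h; by case: sab.
have [w2 Ew2] : exists w, Phi K 1 = cross (Pc a b 1) w.
  apply: cross_surj Pnz1 _; rewrite /Pc -det3E; case: sZ1 => _ _ h; apply/h; by case: sab.
exists (fun t => cross (Pc a b t) (linc w1 w2 t)), (l K), (m K); split.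
- exact: pc_cross (pc_Pc a b) (pc_linc w1 w2).
- by rewrite hl linc0 Ew1.
- by rewrite hm linc1 Ew2.
move=> x y hx hy hz t; case: (eqVneq x y) => [->|hxy]; first by rewrite det3_uu.
have sxy : special x y by [].
have [c' Ec] : exists c', pt x y = c' *: pt a b.
  apply: NNPP => hn; apply: noB1; exists x, y; split => // [[c' Ec]]; apply: hn; by exists c'.
have [zx zy] := ptpar hxy Ec.
exact: (@concl a b (fun t => cross (Pc a b t) (linc w1 w2 t)) x y sab
  (pc_cross (pc_Pc a b) (pc_linc w1 w2)) (fun t' => etrans (dotC _ _) (dot_crossl _ _)) hx hy zx zy t).
Qed.

End Step.

Lemma lt_lt (x K : 'I_n) k : (x < k.+1)%N -> x != K -> nat_of_ord K = k -> (x < k)%N.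
Proof.
move=> hx hxK hK; rewrite ltn_neqAle -ltnS hx andbT; apply/eqP => e.
by move/eqP: hxK; apply; apply/val_inj; rewrite /= e hK.
Qed.

Lemma inv_succ k Phi l m (K : 'I_n) : Inv k Phi l m -> nat_of_ord K = k ->
  exists Phi' l' m', Inv k.+1 Phi' l' m'.
Proof.
move=> inv hK.
have [phi [lk [mk [h1 h2 h3 h4]]]] := step inv hK.
case: inv => hp hl hm h4'.
exists (fun i => if i == K then phi else Phi i), (fun i => if i == K then lk else l i),
  (fun i => if i == K then mk else m i); split.
- by move=> i; case: (i == K).
- by move=> i; case: (eqVneq i K) => [->|hi] //.
- by move=> i; case: (eqVneq i K) => [->|hi] //.
move=> a b c ha hb hc hz t /=.
case hd : ((a == b) || (a == c) || (b == c)).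
  exact: (det_degen (fun i => (if i == K then phi else Phi i) t) hd).
move: hd => /negbT; rewrite !negb_or => /andP [/andP [hab hac] hbc].
case: (eqVneq a K) => [eA|nA].
  subst a; have nb : b != K by rewrite eq_sym.
  have nc : c != K by rewrite eq_sym.

  rewrite ?(negbTE nb) ?(negbTE nc) det3_cyc; apply: h4; [exact: lt_lt hb nb hK|exact: lt_lt hc nc hK|].
  by rewrite /Zh -det3_cyc.
case: (eqVneq b K) => [eB|nB].
  subst b; rewrite ?eqxx ?(negbTE nA).
  have nc : c != K by rewrite eq_sym.
  rewrite ?(negbTE nc) det3_cyc det3_cyc; apply: h4; [exact: lt_lt hc nc hK|exact: lt_lt ha nA hK|].
  by rewrite /Zh -det3_cyc -det3_cyc.
case: (eqVneq c K) => [eC|nC].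
  subst c; rewrite ?eqxx ?(negbTE nA) ?(negbTE nB); apply: h4 => //;
  [exact: lt_lt ha nA hK|exact: lt_lt hb nB hK].
rewrite ?(negbTE nA) ?(negbTE nB) ?(negbTE nC); apply: h4' => //;
  [exact: lt_lt ha nA hK|exact: lt_lt hb nB hK|exact: lt_lt hc nC hK].
Qed.

Lemma inv_ex k : (k <= n)%N -> exists Phi l m, Inv k Phi l m.
Proof.
elim: k => [_|k IH hk]; first by exists (fun i => linc (G1 i) (G2 i)), (fun _ => 1), (fun _ => 1); exact: Inv0.
have [Phi [l [m inv]]] := IH (ltnW hk).
exact: (@inv_succ k Phi l m (Ordinal hk) inv).
Qed.


Lemma gen_real : exists Phi (l m : 'I_n -> C),
  [/\ (forall i, pc (Phi i)), (forall i, G1 i = l i *: Phi i 0),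
     (forall i, G2 i = m i *: Phi i 1) &
     generic (fun t => realization (incidence H) (fun i => Phi i t))].
Proof.
have [Phi [l [m inv]]] := inv_ex (leqnn n).
exists Phi, l, m.
have [v1 v2 v3] := sZ0 inv.
case: inv => hp hl hm h4; split => //.
apply: (gen_impl (fun t => @sameZ_real (fun i => Phi i t))).
have gA : generic (fun t => forall i, Phi i t != 0).
  apply: gen_fin => i; exact: gen_vnz (hp i) (v1 i).
have gB : generic (fun t => forall x : 'I_n * 'I_n, x.1 != x.2 -> cross (Phi x.1 t) (Phi x.2 t) != 0).
  apply: gen_fin => -[i j] /=; case: (eqVneq i j) => [->|hij].
    by apply: gen_impl gen_true => t _; rewrite ?eqxx.
  apply: gen_impl (gen_vnz (pc_cross (hp i) (hp j)) (v2 i j hij)) => t h _; exact: h.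
have gC : generic (fun t => forall x : ('I_n * 'I_n) * 'I_n,
    det3 (Phi x.1.1 t) (Phi x.1.2 t) (Phi x.2 t) = 0 <-> Zh x.1.1 x.1.2 x.2).
  apply: gen_fin => -[[a b] c] /=.
  case: (classic (Zh a b c)) => hz.
    apply: gen_impl gen_true => t _; split => // _; apply: h4 => //.
  have hnz : det3 (Phi a 0) (Phi b 0) (Phi c 0) != 0 by apply/eqP => /v3.
  apply: gen_impl (gen_nz (pf_det (hp a) (hp b) (hp c)) hnz) => t ht; split => // /eqP.
  by rewrite (negbTE ht).
apply: gen_impl (gen_and gA (gen_and gB gC)) => t [hA [hB hC]]; split => //.
- by move=> i j hij; exact: (hB (i, j) hij).
- by move=> a b c; exact: (hC ((a, b), c)).
Qed.

End Arr.

Lemma pf_both (f g : C -> C) t1 t2 : pf f -> pf g -> f t1 != 0 -> g t2 != 0 ->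
  exists t, f t * g t != 0.
Proof.
move=> hf hg h1 h2; have [t [ht1 ht2]] := gen_ex (gen_and (gen_nz hf h1) (gen_nz hg h2)).
by exists t; rewrite mulf_neq0.
Qed.

Lemma irreducible_real n (H : 'I_n -> vec) : arrangement H ->
  (forall i : 'I_n, at_most_two_on (H i) (in_mult predT H)) ->
  zirreducible (C := C) (realization (incidence H)).
Proof.
move=> arrH hyp; split; first by exists H; apply: sameZ_real => //; exact: H_sameZ.
move=> Z1 Z2 [F1 [hF1 eZ1]] [F2 [hF2 eZ2]] cov.
apply: NNPP => hn.
have [G1 [X1 nZ1]] : exists G, realization (incidence H) G /\ ~ Z1 G.
  apply: NNPP => h; apply: hn; left => G XG; apply: NNPP => nz; apply: h; by exists G.
have [G2 [X2 nZ2]] : exists G, realization (incidence H) G /\ ~ Z2 G.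
  apply: NNPP => h; apply: hn; right => G XG; apply: NNPP => nz; apply: h; by exists G.
have [f [Ff fG1]] : exists f, F1 f /\ f G1 <> 0.
  apply: NNPP => h; apply: nZ1; apply/(eZ1 G1); first by case: X1.
  move=> f Ff; apply: NNPP => hf; apply: h; by exists f.
have [g [Fg gG2]] : exists g, F2 g /\ g G2 <> 0.
  apply: NNPP => h; apply: nZ2; apply/(eZ2 G2); first by case: X2.
  move=> g Fg; apply: NNPP => hg; apply: h; by exists g.
have [Phi [l [m [hp hl hm hgen]]]] := gen_real arrH hyp X1 X2.
have [pff [df Hdf]] := hF1 f Ff.
have [pfg [dg Hdg]] := hF2 g Fg.
have E1 : G1 = (fun i => l i *: Phi i 0) by apply: functional_extensionality => i; apply: hl.
have E2 : G2 = (fun i => m i *: Phi i 1) by apply: functional_extensionality => i; apply: hm.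
have f0 : f (fun i => Phi i 0) != 0.
  apply/eqP => h; apply: fG1; rewrite E1 (Hdf (fun i => Phi i 0) l) h mulr0 //.
have g1 : g (fun i => Phi i 1) != 0.
  apply/eqP => h; apply: gG2; rewrite E2 (Hdg (fun i => Phi i 1) m) h mulr0 //.
have [t ht] := pf_both (polyfun_pc pff hp) (polyfun_pc pfg hp) f0 g1.
move/eqP: ht; apply.
apply: (gen_zero (pf_mul (polyfun_pc pff hp) (polyfun_pc pfg hp))).
apply: gen_impl hgen => s Xs.
have nzs : forall i, Phi i s != 0 by case: Xs.
case: (cov _ Xs) => hz.
- by move/(eZ1 _ nzs): hz => /(_ f Ff) ->; rewrite mul0r.
- by move/(eZ2 _ nzs): hz => /(_ g Fg) ->; rewrite mulr0.
Qed.

Lemma ind_conn n (H : 'I_n -> vec) :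
  (forall i : 'I_n, at_most_two_on (H i) (in_mult predT H)) -> ind_connected H.
Proof.
move=> hyp; exists 1%g => t [p1 [p2 [p3 [ho [hm hd]]]]].
apply: (@hyp t); exists p1, p2, p3; split; first by rewrite perm1 in ho.
split => //.
have conv : forall p, in_mult (fun u : 'I_n => (u <= t)%N) (fun u : 'I_n => H ((1%g : {perm 'I_n}) u)) p ->
    in_mult predT H p.
  move=> p [pnz [i [j [k [hdist [_ [h1 h2 h3]]]]]]]; split => //; exists i, j, k.
  by split => //; split => //; rewrite !perm1 in h1 h2 h3.
by case: hm => a b c; split; apply: conv.
Qed.

End Dev.

Unset Implicit Arguments.
Set Strict Implicit.

Theorem mainTheorem3 (C : numClosedFieldType) (n : nat) (H : 'I_n -> 'rV[C]_3) :
  arrangement H ->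
  (forall i : 'I_n, at_most_two_on (H i) (in_mult predT H)) ->
  ind_connected H /\ zirreducible (C := C) (realization (incidence H)).
Proof.
move=> arrH hyp; split; [exact: ind_conn | exact: irreducible_real].
Qed.
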